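(* For distinct $a,b\in H^2$ and $k\in\mathbb R$ let $S_k(a,b)=\{x\in H^2: d_H(x,a)^2-d_H(x,b)^2=k\}$. For $\mathsf x=(x_1,x_2)$, $\mathsf y=(y_1,y_2)$ in $H^2\times H^2$ with $x_i\ne y_i$ let $E_k(\mathsf x,\mathsf y)=S_k(x_1,y_1)\times S_k(y_2,x_2)$. Let $\mathsf x=(x_1,x_2)$, $\mathsf y=(y_1,y_2)$, $\mathsf z=(z_1,z_2)\in H^2\times H^2$ be such that $\mathsf y$ is between $\mathsf x$ and $\mathsf z$, and suppose $E_k(\mathsf x,\mathsf y)\cap E_l(\mathsf y,\mathsf z)\ne\emptyset$ for some $k,l\in\mathbb R$. Then there exists $m\in\mathbb R$ such that either $S_m(x_1,y_1)\cap S_m(y_1,z_1)\neq\emptyset$ or $S_m(y_2,x_2)\cap S_m(z_2,y_2)\neq\emptyset$.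
   Context: For $x,y,z\in H^2$, let $l_1=S_0(x,y)$ and $l_2=S_0(y,z)$ be the equidistant lines; if $l_1,l_2$ are disjoint, the complement of $l_1\cup l_2$ has three components, two half-planes bounded by $l_1$ resp. $l_2$, and a slab bounded by $l_1\cup l_2$. We say $y$ is between $x$ and $z$ if $l_1$ and $l_2$ are disjoint and $y$ lies in the slab. For points of $H^2\times H^2$, $\mathsf y$ is between $\mathsf x$ and $\mathsf z$ if for each $i=1,2$ the coordinate $y_i$ is between $x_i$ and $z_i$ in this sense. $d_H$ is the hyperbolic distance. *)

(* Defs.v *)
From Stdlib Require Import Reals.
Open Scope R_scope.

(* Points of H^2: upper half-plane {(u,v) | v > 0}. *)
Record H2 : Type := mkH2 { hu : R; hv : R; hv_pos : 0 < hv }.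

Definition arcosh (t : R) : R := ln (t + sqrt (t * t - 1)).

(* hyperbolic distance: cosh d(p,q) = 1 + |p - q|^2 / (2 Im p Im q) *)
Definition dH (p q : H2) : R :=
  arcosh (1 + ((hu p - hu q)^2 + (hv p - hv q)^2) / (2 * hv p * hv q)).

Definition S (k : R) (a b : H2) : H2 -> Prop :=
  fun x => dH x a ^ 2 - dH x b ^ 2 = k.

Definition E (k : R) (x y : H2 * H2) : H2 * H2 -> Prop :=
  fun p => S k (fst x) (fst y) (fst p) /\ S k (snd y) (snd x) (snd p).

(* Signed side function of the equidistant line S_0(a,b):
   the two half-planes bounded by S_0(a,b) are {f > 0} and {f < 0}. *)
Definition side (a b p : H2) : R := dH p a ^ 2 - dH p b ^ 2.

(* y is between x and z in H^2: l1 = S_0(x,y), l2 = S_0(y,z) are disjoint,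
   and y lies in the slab, i.e. on the side of l1 containing l2 and on the
   side of l2 containing l1. *)
Definition between (x y z : H2) : Prop :=
  (forall w, ~ (S 0 x y w /\ S 0 y z w)) /\
  (forall w, S 0 y z w -> side x y w * side x y y > 0) /\
  (forall w, S 0 x y w -> side y z w * side y z y > 0).

Definition between2 (x y z : H2 * H2) : Prop :=
  between (fst x) (fst y) (fst z) /\ between (snd x) (snd y) (snd z).

(* Main.v *)
Require Import Defs.
From Stdlib Require Import Reals Lra Ranalysis5.
Open Scope R_scope.

Lemma continuity_pt_id x : continuity_pt id x.
Proof. apply derivable_continuous_pt, derivable_pt_id. Qed.

Lemma cont_sq (f : R -> R) t : continuity_pt f t -> continuity_pt (fun s => f s ^ 2) t.
Proof.
  intro H. change (continuity_pt (comp (fun y => y ^ 2) f) t).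
  apply continuity_pt_comp; auto. apply derivable_continuous_pt, derivable_pt_pow.
Qed.

Lemma cont_ln (x : R) : 0 < x -> continuity_pt ln x.
Proof.
  intro Hx. apply derivable_continuous_pt.
  exists (/ x). apply derivable_pt_lim_ln; exact Hx.
Qed.

Lemma cont_arcosh (t : R) : 1 <= t -> continuity_pt arcosh t.
Proof.
  intro Ht. unfold arcosh.
  change (continuity_pt (comp ln (fun s => s + sqrt (s * s - 1))) t).
  apply continuity_pt_comp.
  - apply continuity_pt_plus. apply continuity_pt_id.
    change (continuity_pt (comp sqrt (fun s => s * s - 1)) t).
    apply continuity_pt_comp.
    + apply continuity_pt_minus. apply continuity_pt_mult; apply continuity_pt_id.
      apply continuity_pt_const; intros a b; reflexivity.
    + apply continuity_pt_sqrt. nra.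
  - apply cont_ln. pose proof (sqrt_pos (t*t-1)). lra.
Qed.

Section Path.
Variables (a b : H2).
Definition U (t : R) := (1 - t) * hu a + t * hu b.
Definition V (t : R) := (1 - t) * hv a + t * hv b.
Definition G (q : H2) (t : R) :=
  arcosh (1 + ((U t - hu q)^2 + (V t - hv q)^2) / (2 * V t * hv q)).

Lemma V_pos t : 0 <= t <= 1 -> 0 < V t.
Proof. intro H. unfold V. pose proof (hv_pos a); pose proof (hv_pos b). nra. Qed.

Lemma cont_G q t : 0 < V t -> continuity_pt (G q) t.
Proof.
  intro Hv. pose proof (hv_pos q) as Hq. unfold G.
  change (continuity_pt (comp arcosh (fun t =>
    1 + ((U t - hu q)^2 + (V t - hv q)^2) / (2 * V t * hv q))) t).
  assert (CU : continuity_pt U t).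
  { unfold U. apply continuity_pt_plus; apply continuity_pt_mult;
      try apply continuity_pt_minus; try apply continuity_pt_id;
      apply continuity_pt_const; intros ? ?; reflexivity. }
  assert (CV : continuity_pt V t).
  { unfold V. apply continuity_pt_plus; apply continuity_pt_mult;
      try apply continuity_pt_minus; try apply continuity_pt_id;
      apply continuity_pt_const; intros ? ?; reflexivity. }
  assert (CC : forall c, continuity_pt (fun _ : R => c) t).
  { intro c. apply continuity_pt_const; intros ? ?; reflexivity. }
  apply continuity_pt_comp.
  - apply continuity_pt_plus. apply CC.
    apply (continuity_pt_div (fun t => (U t - hu q)^2 + (V t - hv q)^2)
                             (fun t => 2 * V t * hv q)).
    + apply continuity_pt_plus; apply (cont_sq (fun t => _ - _));
        apply continuity_pt_minus; auto.
    + apply continuity_pt_mult; [apply continuity_pt_mult|]; auto.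
    + nra.
  - apply cont_arcosh. cbv beta. cut (0 <= ((U t - hu q)^2 + (V t - hv q)^2) / (2 * V t * hv q)). intro; lra.
    unfold Rdiv. apply Rmult_le_pos. apply Rplus_le_le_0_compat; apply pow2_ge_0. left; apply Rinv_0_lt_compat; nra.
Qed.
End Path.

Lemma dH_refl (p : H2) : dH p p = 0.
Proof.
  unfold dH, arcosh.
  replace (1 + ((hu p - hu p) ^ 2 + (hv p - hv p) ^ 2) / (2 * hv p * hv p)) with 1.
  replace (1 * 1 - 1) with 0 by ring. rewrite sqrt_0, Rplus_0_r. apply ln_1.
  pose proof (hv_pos p). field. lra.
Qed.

Lemma G0 a b q : G a b q 0 = dH a q.
Proof.
  unfold G, dH. replace (U a b 0) with (hu a) by (unfold U; ring).
  replace (V a b 0) with (hv a) by (unfold V; ring). reflexivity.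
Qed.

Lemma G1 a b q : G a b q 1 = dH b q.
Proof.
  unfold G, dH. replace (U a b 1) with (hu b) by (unfold U; ring).
  replace (V a b 1) with (hv b) by (unfold V; ring). reflexivity.
Qed.

Definition f3 (a c y w : H2) := dH w a ^ 2 + dH w c ^ 2 - 2 * dH w y ^ 2.

Lemma zero_exists (a c y p : H2) :
  f3 a c y p <= 0 -> exists w, f3 a c y w = 0.
Proof.
  intro Hp.
  assert (Hy : 0 <= f3 a c y y).
  { unfold f3. rewrite dH_refl. nra. }
  destruct (Req_dec (f3 a c y p) 0) as [E|Np]. { exists p; exact E. }
  destruct (Req_dec (f3 a c y y) 0) as [E|Ny]. { exists y; exact E. }
  set (F := fun t => - (G y p a t ^ 2 + G y p c t ^ 2 - 2 * G y p y t ^ 2)).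
  assert (F0 : F 0 = - f3 a c y y).
  { unfold F, f3. rewrite !G0. reflexivity. }
  assert (F1 : F 1 = - f3 a c y p).
  { unfold F, f3. rewrite !G1. reflexivity. }
  destruct (IVT_interv F 0 1) as [t [Ht Ft]].
  - intros t Ht. pose proof (V_pos y p t Ht) as Hv. unfold F.
    apply continuity_pt_opp. apply continuity_pt_minus. apply continuity_pt_plus.
    1,2: apply (cont_sq (G y p _)); apply cont_G; exact Hv.
    apply continuity_pt_mult. apply continuity_pt_const; intros ? ?; reflexivity.
    apply (cont_sq (G y p _)); apply cont_G; exact Hv.
  - lra.
  - lra.
  - lra.
  - exists (mkH2 (U y p t) (V y p t) (V_pos y p t Ht)).
    unfold F in Ft. unfold f3.
    set (w := mkH2 (U y p t) (V y p t) (V_pos y p t Ht)).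
    assert (Hq : forall q, G y p q t = dH w q) by (intro q; reflexivity).
    rewrite !Hq in Ft. lra.
Qed.

Theorem mainTheorem6 (x y z : H2 * H2) :
  between2 x y z ->
  (exists k l : R, exists p : H2 * H2, E k x y p /\ E l y z p) ->
  exists m : R,
    (exists w : H2, S m (fst x) (fst y) w /\ S m (fst y) (fst z) w) \/
    (exists w : H2, S m (snd y) (snd x) w /\ S m (snd z) (snd y) w).
Proof.
  intros _ [k [l [p [[E1 E2] [E3 E4]]]]].
  unfold S in *.
  destruct (Rle_dec (k - l) 0) as [Hkl|Hkl].
  - destruct (zero_exists (fst x) (fst z) (fst y) (fst p)) as [w Hw].
    { unfold f3. lra. }
    exists (dH w (fst x) ^ 2 - dH w (fst y) ^ 2). left. exists w.
    unfold f3 in Hw. split; lra.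
  - destruct (zero_exists (snd x) (snd z) (snd y) (snd p)) as [w Hw].
    { unfold f3. lra. }
    exists (dH w (snd y) ^ 2 - dH w (snd x) ^ 2). right. exists w.
    unfold f3 in Hw. split; lra.
Qed.
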